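(* Let $\alpha$ be a sentence, $\psi$ and $\beta$ formulas, and $\Gamma$ a set of formulas. If $\Gamma,\beta\vdash\psi$, then $\Gamma,\alpha\vee\beta\vdash\alpha\vee\psi$.
   Context: Fix a countable predicate language $\mathcal L$ consisting of variables, constant symbols and predicate symbols (so terms are just variables and constants), with connectives $\to$, $\&$, the propositional constant $0$ and quantifiers $\forall,\exists$. Abbreviations: $\phi\wedge\psi$ is $\phi\&(\phi\to\psi)$; $\phi\vee\psi$ is $((\phi\to\psi)\to\psi)\wedge((\psi\to\phi)\to\phi)$; $\neg\phi$ is $\phi\to 0$; $1$ is $0\to 0$; $\beta^n$ is $\beta\&\cdots\&\beta$ ($n$ factors). $\phi(x/t)$ denotes the result of substituting the term $t$ for the free occurrences of $x$ in $\phi$. A sentence is a formula with no free variables; a theory is any set of formulas. Hájek's basic predicate logic BL$\forall$ has the axiom schemata (A1) $(\phi\to\psi)\to((\psi\to\chi)\to(\phi\to\chi))$; (A2) $(\phi\&\psi)\to\phi$; (A3) $(\phi\&\psi)\to(\psi\&\phi)$; (A4) $(\phi\&(\phi\to\psi))\to(\psi\&(\psi\to\phi))$; (A5) $(\phi\to(\psi\to\chi))\to((\phi\&\psi)\to\chi)$; (A6) $((\phi\&\psi)\to\chi)\to(\phi\to(\psi\to\chi))$; (A7) $((\phi\to\psi)\to\chi)\to(((\psi\to\phi)\to\chi)\to\chi)$; (A8) $0\to\phi$; ($\forall$1) $\forall x\phi\to\phi(x/t)$ and ($\exists$1) $\phi(x/t)\to\exists x\phi$, for $t$ substitutable for $x$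 in $\phi$; ($\forall$2) $\forall x(\phi\to\psi)\to(\phi\to\forall x\psi)$, ($\exists$2) $\forall x(\psi\to\phi)\to(\exists x\psi\to\phi)$ and (Lin) $\forall x(\psi\vee\phi)\to((\forall x\psi)\vee\phi)$, each with $x$ not free in $\phi$; its rules are modus ponens (from $\phi$ and $\phi\to\psi$ infer $\psi$) and generalization (from $\phi$ infer $\forall x\phi$). The logic $\vdash$ extends BL$\forall$ by the axiom schema (RC) $\forall x(\chi\&\chi)\to((\forall x\chi)\&(\forall x\chi))$ for every formula $\chi$, and the infinitary rule (Inf): from all of $\phi\vee(\alpha\to\beta^n)$, $n\in\mathbb N$, infer $\phi\vee(\alpha\to(\alpha\&\beta))$, where $\phi,\alpha,\beta$ are sentences. A proof from $\Gamma$ is a sequence $(\phi_i)_{i\le\xi}$ indexed by the ordinals up to some ordinal $\xi$ such that each $\phi_i$ is an axiom of BL$\forall$, an instance of (RC), a member of $\Gamma$, or is obtained from formulas in $\{\phi_j: j<i\}$ by modus ponens, generalization, or (Inf). $\Gamma\vdash\phi$ means there is a proof from $\Gamma$ whose last member is $\phi$; $\Gamma,\psi\vdash\phi$ means $\Gamma\cup\{\psi\}\vdash\phi$. *)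

(* Defs.v *)
From Stdlib Require Import Arith Fin.

Set Implicit Arguments.

Record language := {
  Const : Type;
  Pred : Type;
  arity : Pred -> nat;
  const_countable : exists f : Const -> nat, forall a b, f a = f b -> a = b;
  pred_countable : exists f : Pred -> nat, forall a b, f a = f b -> a = b
}.

Section Syntax.
Variable L : language.

Inductive term : Type :=
| tvar : nat -> term
| tconst : Const L -> term.

Inductive formula : Type :=
| Atom : forall p : Pred L, (Fin.t (arity L p) -> term) -> formula
| Imp : formula -> formula -> formula
| SConj : formula -> formula -> formula
| Zero : formula
| All : nat -> formula -> formula
| Ex : nat -> formula -> formula.

Definition term_has_var (x : nat) (t : term) : Prop :=
  match t with tvar y => y = x | tconst _ => False end.

Fixpoint free (x : nat) (phi : formula) : Prop :=
  match phi with
  | Atom p ts => exists i, term_has_var x (ts i)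
  | Imp a b => free x a \/ free x b
  | SConj a b => free x a \/ free x b
  | Zero => False
  | All y a => y <> x /\ free x a
  | Ex y a => y <> x /\ free x a
  end.

Definition sentence (phi : formula) : Prop := forall x, ~ free x phi.

Definition subst_term (x : nat) (t s : term) : term :=
  match s with
  | tvar y => if Nat.eqb y x then t else s
  | tconst _ => s
  end.

Fixpoint subst (x : nat) (t : term) (phi : formula) : formula :=
  match phi with
  | Atom p ts => Atom p (fun i => subst_term x t (ts i))
  | Imp a b => Imp (subst x t a) (subst x t b)
  | SConj a b => SConj (subst x t a) (subst x t b)
  | Zero => Zero
  | All y a => if Nat.eqb y x then All y a else All y (subst x t a)
  | Ex y a => if Nat.eqb y x then Ex y a else Ex y (subst x t a)
  end.

Fixpoint substitutable (x : nat) (t : term) (phi : formula) : Prop :=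
  match phi with
  | Atom _ _ => True
  | Imp a b => substitutable x t a /\ substitutable x t b
  | SConj a b => substitutable x t a /\ substitutable x t b
  | Zero => True
  | All y a => y = x \/ (substitutable x t a /\ (free x a -> ~ term_has_var y t))
  | Ex y a => y = x \/ (substitutable x t a /\ (free x a -> ~ term_has_var y t))
  end.

Definition Wedge (a b : formula) : formula := SConj a (Imp a b).
Definition Vee (a b : formula) : formula :=
  Wedge (Imp (Imp a b) b) (Imp (Imp b a) a).
Definition Neg (a : formula) : formula := Imp a Zero.
Definition One : formula := Imp Zero Zero.

Fixpoint Pow (b : formula) (n : nat) : formula :=
  match n with
  | 0 => One
  | 1 => b
  | S m => SConj b (Pow b m)
  end.

Inductive BLaxiom : formula -> Prop :=
| A1 : forall p q r, BLaxiom (Imp (Imp p q) (Imp (Imp q r) (Imp p r)))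
| A2 : forall p q, BLaxiom (Imp (SConj p q) p)
| A3 : forall p q, BLaxiom (Imp (SConj p q) (SConj q p))
| A4 : forall p q, BLaxiom (Imp (SConj p (Imp p q)) (SConj q (Imp q p)))
| A5 : forall p q r, BLaxiom (Imp (Imp p (Imp q r)) (Imp (SConj p q) r))
| A6 : forall p q r, BLaxiom (Imp (Imp (SConj p q) r) (Imp p (Imp q r)))
| A7 : forall p q r,
    BLaxiom (Imp (Imp (Imp p q) r) (Imp (Imp (Imp q p) r) r))
| A8 : forall p, BLaxiom (Imp Zero p)
| Ax_all1 : forall x t p, substitutable x t p ->
    BLaxiom (Imp (All x p) (subst x t p))
| Ax_ex1 : forall x t p, substitutable x t p ->
    BLaxiom (Imp (subst x t p) (Ex x p))
| Ax_all2 : forall x p q, ~ free x p ->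
    BLaxiom (Imp (All x (Imp p q)) (Imp p (All x q)))
| Ax_ex2 : forall x p q, ~ free x p ->
    BLaxiom (Imp (All x (Imp q p)) (Imp (Ex x q) p))
| Ax_lin : forall x p q, ~ free x p ->
    BLaxiom (Imp (All x (Vee q p)) (Vee (All x q) p)).

(** This is equivalent to the existence of an ordinal-indexed
    proof. *)
Inductive deriv (Gamma : formula -> Prop) : formula -> Prop :=
| d_ax : forall p, BLaxiom p -> deriv Gamma p
| d_rc : forall x c,
    deriv Gamma (Imp (All x (SConj c c)) (SConj (All x c) (All x c)))
| d_hyp : forall p, Gamma p -> deriv Gamma p
| d_mp : forall p q, deriv Gamma p -> deriv Gamma (Imp p q) -> deriv Gamma q
| d_gen : forall x p, deriv Gamma p -> deriv Gamma (All x p)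
| d_inf : forall phi a b, sentence phi -> sentence a -> sentence b ->
    (forall n, deriv Gamma (Vee phi (Imp a (Pow b n)))) ->
    deriv Gamma (Vee phi (Imp a (SConj a b))).

Definition extend (Gamma : formula -> Prop) (psi : formula) : formula -> Prop :=
  fun f => Gamma f \/ f = psi.

End Syntax.

(* Main.v *)
Require Import Defs.

Section BL.
Variable L : language.
Variable G : formula L -> Prop.
Notation D := (deriv G).

Lemma mp (p q : formula L) : D p -> D (Imp p q) -> D q.
Proof. intros H1 H2; exact (d_mp H1 H2). Qed.
Lemma ax (p : formula L) : BLaxiom p -> D p.
Proof. intros; apply d_ax; auto. Qed.
Hint Resolve ax : core.
Hint Constructors BLaxiom : core.

Lemma trans (p q r : formula L) : D (Imp p q) -> D (Imp q r) -> D (Imp p r).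
Proof. intros H1 H2. eapply mp; [exact H2|]. eapply mp; [exact H1|]. auto. Qed.
Lemma weak (p q : formula L) : D (Imp p (Imp q p)).
Proof. eapply mp; [apply ax, A2|]. apply ax, (A6 p q p). Qed.
Lemma cmp (p q : formula L) : D (Imp (SConj p (Imp p q)) q).
Proof. eapply trans; [apply ax, A4| apply ax, A2]. Qed.
Lemma mpform (p q : formula L) : D (Imp p (Imp (Imp p q) q)).
Proof. eapply mp; [apply cmp|]. apply ax, A6. Qed.
Lemma one : D (One L).
Proof. apply ax, A8. Qed.
Lemma id (p : formula L) : D (Imp p p).
Proof. eapply trans; [apply (weak p (One L))|]. eapply mp; [apply one| apply mpform]. Qed.
Lemma exch (p q r : formula L) : D (Imp (Imp p (Imp q r)) (Imp q (Imp p r))).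
Proof.
  eapply trans; [apply ax, (A5 p q r)|].
  eapply trans; [| apply ax, (A6 q p r)].
  eapply mp; [apply ax, (A3 q p)| apply ax, A1].
Qed.
Lemma exch_r (p q r : formula L) : D (Imp p (Imp q r)) -> D (Imp q (Imp p r)).
Proof. intros H; eapply mp; [exact H| apply exch]. Qed.
Lemma post (p q r : formula L) : D (Imp q r) -> D (Imp (Imp p q) (Imp p r)).
Proof. intros H; eapply mp; [exact H|]. apply exch_r, ax, A1. Qed.
Lemma pre (p q r : formula L) : D (Imp p q) -> D (Imp (Imp q r) (Imp p r)).
Proof. intros H; eapply mp; [exact H|]. apply ax, A1. Qed.
Lemma pair (p q : formula L) : D (Imp p (Imp q (SConj p q))).
Proof. eapply mp; [apply id| apply ax, A6]. Qed.

Lemma conj_intro (c X Y : formula L) :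
  D (Imp c X) -> D (Imp c Y) -> D (Imp c (Wedge X Y)).
Proof.
  intros HX HY. unfold Wedge.
  assert (h1 : D (Imp (Imp X Y) (Imp c (SConj X (Imp X Y))))).
  { eapply trans; [apply exch_r, (pair X (Imp X Y))|]. apply pre, HX. }
  assert (h2 : D (Imp (Imp Y X) (Imp c (SConj X (Imp X Y))))).
  { eapply trans; [apply exch_r, (pair Y (Imp Y X))|].
    eapply trans; [apply post, ax, A4|]. apply pre, HY. }
  eapply mp; [exact h2|]. eapply mp; [exact h1|]. apply ax, A7.
Qed.

Lemma or_introl (p q : formula L) : D (Imp p (Vee p q)).
Proof. apply conj_intro; [apply mpform| apply weak]. Qed.
Lemma or_intror (p q : formula L) : D (Imp q (Vee p q)).
Proof. apply conj_intro; [apply weak| apply mpform]. Qed.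

Lemma or_elim (p q r : formula L) :
  D (Imp (Imp p r) (Imp (Imp q r) (Imp (Vee p q) r))).
Proof.
  set (V := Vee p q).
  assert (e1 : D (Imp V (Imp (Imp p q) q))) by apply ax, A2.
  assert (e2 : D (Imp V (Imp (Imp q p) p))) by apply cmp.
  assert (c1 : D (Imp (Imp p q) (Imp (Imp p r) (Imp (Imp q r) (Imp V r))))).
  { eapply trans; [| apply weak].
    eapply trans; [apply exch_r, e1| apply ax, A1]. }
  assert (c2 : D (Imp (Imp q p) (Imp (Imp p r) (Imp (Imp q r) (Imp V r))))).
  { eapply trans; [eapply trans; [apply exch_r, e2| apply ax, A1]|].
    apply post, weak. }
  eapply mp; [exact c2|]. eapply mp; [exact c1|]. apply ax, A7.
Qed.

Lemma or_elim_r (p q r : formula L) :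
  D (Imp p r) -> D (Imp q r) -> D (Imp (Vee p q) r).
Proof. intros Hp Hq. eapply mp; [exact Hq|]. eapply mp; [exact Hp| apply or_elim]. Qed.

Lemma mp_or (a p q : formula L) :
  D (Vee a p) -> D (Vee a (Imp p q)) -> D (Vee a q).
Proof.
  intros H1 H2. eapply mp; [exact H2|]. eapply mp; [exact H1|].
  apply or_elim_r.
  - eapply trans; [apply or_introl| apply weak].
  - apply exch_r. apply or_elim_r.
    + eapply trans; [apply or_introl| apply weak].
    + apply post, or_intror.
Qed.

Lemma or_comm (a b : formula L) : D (Imp (Vee a b) (Vee b a)).
Proof. apply or_elim_r; [apply or_intror| apply or_introl]. Qed.

Lemma assoc1 (a b c : formula L) : D (Imp (Vee a (Vee b c)) (Vee (Vee a b) c)).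
Proof.
  apply or_elim_r.
  - eapply trans; [apply (or_introl a b)| apply or_introl].
  - apply or_elim_r; [| apply or_intror].
    eapply trans; [apply (or_intror a b)| apply or_introl].
Qed.

Lemma assoc2 (a b c : formula L) : D (Imp (Vee (Vee a b) c) (Vee a (Vee b c))).
Proof.
  apply or_elim_r.
  - apply or_elim_r; [apply or_introl|].
    eapply trans; [apply (or_introl b c)| apply or_intror].
  - eapply trans; [apply (or_intror b c)| apply or_intror].
Qed.

Lemma thm_or (a p : formula L) : D p -> D (Vee a p).
Proof. intros H; eapply mp; [exact H| apply or_intror]. Qed.

End BL.

Lemma sentence_vee (L : language) (a b : formula L) :
  sentence a -> sentence b -> sentence (Vee a b).
Proof.
  unfold sentence; intros Ha Hb x H; simpl in H.
  specialize (Ha x); specialize (Hb x); tauto.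
Qed.

Theorem mainTheorem2 (L : language) (Gamma : formula L -> Prop)
  (alpha psi beta : formula L) :
  sentence alpha ->
  deriv (extend Gamma beta) psi ->
  deriv (extend Gamma (Vee alpha beta)) (Vee alpha psi).
Proof.
  intros Ha H. induction H.
  - apply thm_or, ax; exact H.
  - apply thm_or, d_rc.
  - destruct H as [H|H].
    + apply thm_or, d_hyp; left; exact H.
    + subst. apply d_hyp; right; reflexivity.
  - exact (mp_or _ _ _ _ _ IHderiv1 IHderiv2).
  - eapply mp; [| apply or_comm].
    eapply mp; [| apply ax, (Ax_lin x alpha p)].
    + apply d_gen. eapply mp; [exact IHderiv| apply or_comm].
    + intros Hf; exact (Ha x Hf).
  - eapply mp; [| apply assoc2].
    apply d_inf; auto.
    + apply sentence_vee; auto.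
    + intros n. eapply mp; [apply H3| apply assoc1].
Qed.
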